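(* Let $D\in\mathbb{N}$, let $G=(V,E)$ be a finite $D$-Ricci-flat graph, and let $\psi\in C^1((0,\infty))$ be concave with $C_\psi>0$. Then $G$ satisfies the $CD\psi(d,0)$ inequality with $d=D/C_\psi$.
   Context: A finite graph $G=(V,E)$: finite set $V$, irreflexive symmetric relation $E$; $v\sim w$ iff $(v,w)\in E$; $N(v):=\{v\}\cup\{w:w\sim v\}$. $G$ is $D$-Ricci-flat if for every $v\in V$: every $w\in N(v)$ has degree $D$ and there are maps $\eta_1,\dots,\eta_D:N(v)\to V$ with, for all $w\in N(v)$ and $i\neq j$: $\eta_i(w)\sim w$, $\eta_i(w)\neq\eta_j(w)$, and $\bigcup_k\{\eta_k(\eta_i(v))\}=\bigcup_k\{\eta_i(\eta_k(v))\}$. Laplacian $\Delta f(v)=\sum_{w\sim v}(f(w)-f(v))$. For positive $f$: $(\Delta^\psi f)(v):=\Delta\big[\psi\big(\tfrac{f}{f(v)}\big)\big](v)$; $(\Omega^\psi f)(v):=\Delta\Big[\psi'\big(\tfrac{f}{f(v)}\big)\cdot\tfrac{f}{f(v)}\cdot\big(\tfrac{\Delta f}{f}-\tfrac{(\Delta f)(v)}{f(v)}\big)\Big](v)$; $2\Gamma_2^\psi(f):=\Omega^\psi f+\frac{\Delta f\,\Delta^\psi f}{f}-\frac{\Delta(f\,\Delta^\psi f)}{f}$. $CD\psi(d,0)$: $\Gamma_2^\psi(f)\ge\frac1d(\Delta^\psi f)^2$ for all positive $f$. For $x,y>0$, $\widetilde{\psi}(x,y):=[\psi'(x)+\psi'(y)](1-xy)+x[\psi(y)-\psi(1/x)]+y[\psi(x)-\psi(1/y)]$,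 and $C_\psi:=\inf\frac{\widetilde{\psi}(x,y)}{(\psi(x)+\psi(y)-2\psi(1))^2}$, the infimum over all $x,y>0$ with $\psi(x)+\psi(y)\neq2\psi(1)$. *)

(* Defs.v *)
From mathcomp Require Import ssreflect ssrfun ssrbool eqtype ssrnat seq fintype bigop.
From Stdlib Require Import Reals.
Set Implicit Arguments. Unset Strict Implicit. Unset Printing Implicit Defensive.
Open Scope R_scope.

Section Defs.
Variable T : finType.
Variable e : rel T.

Definition simple_graph : Prop := irreflexive e /\ symmetric e.

Definition inN (v w : T) : Prop := w = v \/ e w v.

Definition degree (w : T) : nat := #|[pred u | e w u]|.

Definition ricci_flat (D : nat) : Prop :=
  forall v : T,
    (forall w, inN v w -> degree w = D) /\
    exists eta : 'I_D -> T -> T,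
      (forall w i, inN v w -> e (eta i w) w) /\
      (forall w i j, inN v w -> i <> j -> eta i w <> eta j w) /\
      (forall i x, (exists k, x = eta k (eta i v)) <-> (exists k, x = eta i (eta k v))).

Definition lap (g : T -> R) (v : T) : R :=
  \big[Rplus/0]_(w | e v w) (g w - g v).

Definition lap_psi (psi : R -> R) (f : T -> R) (v : T) : R :=
  lap (fun x => psi (f x / f v)) v.

Definition Omega_psi (dpsi : R -> R) (f : T -> R) (v : T) : R :=
  lap (fun x => dpsi (f x / f v) * (f x / f v) * (lap f x / f x - lap f v / f v)) v.

Definition Gamma2_psi_twice (psi dpsi : R -> R) (f : T -> R) (v : T) : R :=
  Omega_psi dpsi f v + lap f v * lap_psi psi f v / f v
  - lap (fun x => f x * lap_psi psi f x) v / f v.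

Definition Gamma2_psi (psi dpsi : R -> R) (f : T -> R) (v : T) : R :=
  Gamma2_psi_twice psi dpsi f v / 2.

Definition CDpsi (psi dpsi : R -> R) (d : R) : Prop :=
  forall f : T -> R, (forall x, 0 < f x) ->
    forall v, Gamma2_psi psi dpsi f v >= / d * (lap_psi psi f v) ^ 2.
End Defs.

Definition psi_tilde (psi dpsi : R -> R) (x y : R) : R :=
  (dpsi x + dpsi y) * (1 - x * y) + x * (psi y - psi (/ x)) + y * (psi x - psi (/ y)).

Definition Cpsi_set (psi dpsi : R -> R) (r : R) : Prop :=
  exists x y, 0 < x /\ 0 < y /\ psi x + psi y <> 2 * psi 1 /\
    r = psi_tilde psi dpsi x y / (psi x + psi y - 2 * psi 1) ^ 2.

Definition is_inf (S : R -> Prop) (c : R) : Prop :=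
  (forall r, S r -> c <= r) /\ (forall b, (forall r, S r -> b <= r) -> b <= c).

Definition C1_pos (psi dpsi : R -> R) : Prop :=
  (forall x, 0 < x -> derivable_pt_lim psi x (dpsi x)) /\
  (forall x, 0 < x -> continuity_pt dpsi x).

Definition concave_pos (psi : R -> R) : Prop :=
  forall x y t, 0 < x -> 0 < y -> 0 <= t <= 1 ->
    t * psi x + (1 - t) * psi y <= psi (t * x + (1 - t) * y).

(* Main.v *)
Require Import Defs.
From HB Require Import structures.
From mathcomp Require Import ssreflect ssrfun ssrbool eqtype ssrnat seq fintype bigop.
From Stdlib Require Import Reals Lra Psatz.
Open Scope R_scope.

HB.instance Definition _ := Monoid.isComLaw.Build R 0 Rplus (fun x y z => esym (Rplus_assoc x y z)) Rplus_comm Rplus_0_l.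


Lemma sumD n (F G : 'I_n -> R) : \big[Rplus/0]_(i < n) (F i + G i) = \big[Rplus/0]_(i < n) F i + \big[Rplus/0]_(i < n) G i.
Proof. exact: big_split. Qed.

Lemma sumM n (c : R) (F : 'I_n -> R) : c * (\big[Rplus/0]_(i < n) F i) = \big[Rplus/0]_(i < n) (c * F i).
Proof.
apply: (big_morph (fun x => c * x)); [by move=> x y; ring | ring].
Qed.

Lemma sumN n (F : 'I_n -> R) : - (\big[Rplus/0]_(i < n) F i) = \big[Rplus/0]_(i < n) (- F i).
Proof.
apply: (big_morph (fun x => - x)); [by move=> x y; ring | ring].
Qed.

Lemma sumB n (F G : 'I_n -> R) : \big[Rplus/0]_(i < n) (F i - G i) = \big[Rplus/0]_(i < n) F i - \big[Rplus/0]_(i < n) G i.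
Proof. by rewrite /Rminus sumD sumN. Qed.

Lemma sumC n (c : R) : \big[Rplus/0]_(i < n) c = INR n * c.
Proof.
rewrite big_const_ord; elim: n => [|n IH]; first by rewrite /=; ring.
rewrite [iter _ _ _]/= IH S_INR; ring.
Qed.

Lemma sum_ext n (F G : 'I_n -> R) : (forall i, F i = G i) -> \big[Rplus/0]_(i < n) F i = \big[Rplus/0]_(i < n) G i.
Proof. by move=> H; apply: eq_bigr => i _. Qed.

Lemma sum_le n (F G : 'I_n -> R) : (forall i, F i <= G i) -> \big[Rplus/0]_(i < n) F i <= \big[Rplus/0]_(i < n) G i.
Proof.
move=> H; apply: (big_ind2 (fun x y => x <= y)) => //; [lra | move=> *; lra].
Qed.

Lemma sum_ge0 n (F : 'I_n -> R) : (forall i, 0 <= F i) -> 0 <= \big[Rplus/0]_(i < n) F i.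
Proof.
move=> H; apply: (big_ind (fun x => 0 <= x)) => //; [lra | move=> *; lra].
Qed.

Lemma sum_swap n (F : 'I_n -> 'I_n -> R) : \big[Rplus/0]_(i < n) \big[Rplus/0]_(k < n) F i k = \big[Rplus/0]_(k < n) \big[Rplus/0]_(i < n) F i k.
Proof. exact: exchange_big. Qed.

Lemma sum_drop n (F : 'I_n -> R) j : (forall i, 0 <= F i) -> F j <= \big[Rplus/0]_(i < n) F i.
Proof.
move=> H; rewrite (bigD1 j) //=.
rewrite -{1}(Rplus_0_r (F j)); apply: Rplus_le_compat_l.
apply: (big_ind (fun x => 0 <= x)) => //; [lra | move=> *; lra].
Qed.

Lemma sum_reindex n (h : 'I_n -> 'I_n) (F : 'I_n -> R) : injective h ->
  \big[Rplus/0]_(i < n) F i = \big[Rplus/0]_(i < n) F (h i).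
Proof. move=> Hh; exact: (reindex_inj Hh). Qed.

Lemma cauchy n (u : 'I_n -> R) : (\big[Rplus/0]_(i < n) u i) ^ 2 <= INR n * \big[Rplus/0]_(i < n) (u i ^ 2).
Proof.
case: n u => [|n] u.
  rewrite !big_ord0 /=; right; ring.
set S := \big[Rplus/0]_(i < n.+1) u i.
have Hn : 0 < INR n.+1 by apply: lt_0_INR; apply/ltP.
set m := S / INR n.+1.
have H0 : 0 <= \big[Rplus/0]_(i < n.+1) ((u i - m) ^ 2).
  apply: sum_ge0 => i; apply: pow2_ge_0.
have E : \big[Rplus/0]_(i < n.+1) ((u i - m) ^ 2) = \big[Rplus/0]_(i < n.+1) (u i ^ 2) - 2 * m * S + INR n.+1 * (m * m).
  rewrite -sumC /S sumM -sumB -sumD; apply: sum_ext => i; ring.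
rewrite E in H0.
have Hm : S = INR n.+1 * m by rewrite /m; field; lra.
rewrite Hm in H0 *. nra.
Qed.
Lemma tangent (psi dpsi : R -> R) : C1_pos psi dpsi -> concave_pos psi ->
  forall a x, 0 < a -> 0 < x -> psi x <= psi a + dpsi a * (x - a).
Proof.
move=> [Hd _] Hc a x Ha Hx.
destruct (Req_dec x a) as [->|Hxa]; first lra.
apply: Rnot_lt_le => Hlt.
have Hax : 0 < Rabs (x - a) by apply: Rabs_pos_lt; lra.
set eps := (psi x - psi a - dpsi a * (x - a)) / (2 * Rabs (x - a)).
have Heps : 0 < eps.
 rewrite /eps; apply: Rdiv_lt_0_compat. lra. lra.
have [del Hdel] := Hd a Ha eps Heps.
set t := Rmin 1 (del / (2 * Rabs (x - a))).
have Hdp : 0 < del := cond_pos del.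
have Ht0 : 0 < t by apply: Rmin_pos; [lra | apply: Rdiv_lt_0_compat; lra].
have Ht1 : t <= 1 by apply: Rmin_l.
have Ht2 : t <= del / (2 * Rabs (x - a)) by apply: Rmin_r.
set h := t * (x - a).
have Hh0 : h <> 0 by rewrite /h; apply: Rmult_integral_contrapositive; split; lra.
have Hhd : Rabs h < del.
  rewrite /h Rabs_mult Rabs_pos_eq; last lra.
  have : t * Rabs (x - a) <= del / (2 * Rabs (x - a)) * Rabs (x - a)
    by apply: Rmult_le_compat_r; lra.
  have -> : del / (2 * Rabs (x - a)) * Rabs (x - a) = del / 2 by field; lra.
  lra.
have Hq := Hdel h Hh0 Hhd.
have Hcc := Hc x a t Hx Ha (conj (Rlt_le _ _ Ht0) Ht1).
have Hah : a + h = t * x + (1 - t) * a by rewrite /h; ring.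
rewrite Hah in Hq.
set q := (psi (t * x + (1 - t) * a) - psi a) / h in Hq.
have Hqe : psi (t * x + (1 - t) * a) - psi a = q * h by rewrite /q; field.
have Hge : t * (psi x - psi a) <= q * h by lra.
have Hge' : psi x - psi a <= q * (x - a).
  rewrite /h in Hge.
  apply: (Rmult_le_reg_l t) => //; lra.
have Hab := Rabs_def2 _ _ Hq.
destruct (Rle_or_lt 0 (x - a)) as [Hp | Hn].
- rewrite Rabs_pos_eq in Heps Hax; try lra.
  have : q * (x - a) <= (dpsi a + eps) * (x - a) by apply: Rmult_le_compat_r; lra.
  have -> : (dpsi a + eps) * (x - a) = dpsi a * (x - a) + (psi x - psi a - dpsi a * (x - a)) / 2.
    rewrite /eps Rabs_pos_eq; [field; lra | lra].
  lra.
- have : q * (x - a) <= (dpsi a - eps) * (x - a).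
    nra.
  have -> : (dpsi a - eps) * (x - a) = dpsi a * (x - a) + (psi x - psi a - dpsi a * (x - a)) / 2.
    rewrite /eps Rabs_left; [field; lra | lra].
  lra.
Qed.
Lemma size_ie D : size (index_enum 'I_D) = D.
Proof. by rewrite [index_enum _]unlock -enumT size_enum_ord. Qed.

Lemma inj_of_dist (D : nat) (T : eqType) (h : 'I_D -> T) :
  (forall i j, i <> j -> h i <> h j) -> injective h.
Proof.
move=> H i j Hij; case: (eqVneq i j) => // Hn; exfalso; apply: (H i j) => //; exact/eqP.
Qed.

Arguments inj_of_dist {D T h}.

Lemma nbr_sum (T : finType) (e : rel T) (D : nat) (h : 'I_D -> T) (w : T) :
  symmetric e -> degree e w = D -> (forall i, e (h i) w) ->
  (forall i j, i <> j -> h i <> h j) ->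
  forall g : T -> R, \big[Rplus/0]_(u | e w u) g u = \big[Rplus/0]_(i < D) g (h i).
Proof.
move=> Hs Hd Hn Hdist g.
have Hinj := inj_of_dist Hdist.
transitivity (\big[Rplus/0]_(u <- enum [pred u | e w u]) g u).
  by rewrite big_enum /=; apply: eq_bigl => u; rewrite inE.
transitivity (\big[Rplus/0]_(u <- map h (index_enum 'I_D)) g u); last by rewrite big_map.
apply: perm_big; apply: uniq_perm.
- exact: enum_uniq.
- by rewrite map_inj_uniq // index_enum_uniq.
have Hsub : {subset map h (index_enum 'I_D) <= enum [pred u | e w u]}.
  move=> u /mapP [i _ ->]; rewrite mem_enum inE Hs; exact: Hn.
have [_ Heq] := uniq_min_size (s1 := map h (index_enum 'I_D)) (s2 := enum [pred u | e w u])
  ltac:(by rewrite map_inj_uniq // index_enum_uniq) Hsub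
  ltac:(by rewrite -cardE size_map size_ie; move: Hd; rewrite /degree => ->).
by move=> u; rewrite Heq.
Qed.

Lemma seq_sum_eq (T : eqType) (s1 s2 : seq T) (g : T -> R) :
  uniq s1 -> leq (size s2) (size s1) -> s1 =i s2 ->
  \big[Rplus/0]_(u <- s1) g u = \big[Rplus/0]_(u <- s2) g u.
Proof.
move=> Hu Hsz Heq.
have Hsub : {subset s1 <= s2} by move=> u; rewrite Heq.
have Hu2 : uniq s2 by apply: (leq_size_uniq Hu Hsub).
by apply: perm_big; apply: uniq_perm.
Qed.
Lemma uniq_inj (I : finType) (T : finType) (h : I -> T) : uniq (map h (index_enum I)) -> injective h.
Proof.
move=> Hu.
have E : index_enum I = enum I by rewrite -deprecated_filter_index_enum filter_predT.
rewrite E in Hu.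
have Hc : #|image h I| == #|I|.
  by move/card_uniqP: Hu => ->; rewrite size_map cardE.
move=> i j; move/image_injP: Hc => Hi; exact: Hi.
Qed.

Lemma Hsym_ge0 (psi dpsi : R -> R) :
  (forall a x, 0 < a -> 0 < x -> psi x <= psi a + dpsi a * (x - a)) ->
  forall a b w, 0 < a -> 0 < b -> 0 < w ->
  0 <= (dpsi a + dpsi b) * (w - a * b) - a * psi (w / a) - b * psi (w / b)
       + b * psi a + a * psi b.
Proof.
move=> Ht a b w Ha Hb Hw.
have H1 := Ht a (w / b) Ha ltac:(apply: Rdiv_lt_0_compat; lra).
have H2 := Ht b (w / a) Hb ltac:(apply: Rdiv_lt_0_compat; lra).
have H1' := Rmult_le_compat_l b _ _ (Rlt_le _ _ Hb) H1.
have H2' := Rmult_le_compat_l a _ _ (Rlt_le _ _ Ha) H2.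
have E1 : b * (psi a + dpsi a * (w / b - a)) = b * psi a + dpsi a * (w - a * b) by field; lra.
have E2 : a * (psi b + dpsi b * (w / a - b)) = a * psi b + dpsi b * (w - a * b) by field; lra.
rewrite E1 in H1'; rewrite E2 in H2'.
lra.
Qed.

Lemma tilde_bound (psi dpsi : R -> R) (C : R) :
  (forall a x, 0 < a -> 0 < x -> psi x <= psi a + dpsi a * (x - a)) ->
  is_inf (Cpsi_set psi dpsi) C -> 0 < C ->
  forall x y, 0 < x -> 0 < y ->
  C * (psi x + psi y - 2 * psi 1) ^ 2 <=
  (dpsi x + dpsi y) * (1 - x * y) - x * psi (1 / x) - y * psi (1 / y)
       + y * psi x + x * psi y.
Proof.
move=> Ht [Hinf _] HC x y Hx Hy.
have H0 := @Hsym_ge0 psi dpsi Ht x y 1 Hx Hy Rlt_0_1.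
destruct (Req_dec (psi x + psi y) (2 * psi 1)) as [Heq | Hne].
  have -> : psi x + psi y - 2 * psi 1 = 0 by lra.
  have -> : C * 0 ^ 2 = 0 by ring.
  exact: H0.
have Hs : 0 < (psi x + psi y - 2 * psi 1) ^ 2.
  have Hn0 : psi x + psi y - 2 * psi 1 <> 0 by lra.
  nra.
have Hr := Hinf _ (ex_intro _ x (ex_intro _ y (conj Hx (conj Hy (conj Hne erefl))))).
have E : psi_tilde psi dpsi x y = (dpsi x + dpsi y) * (1 - x * y) - x * psi (1 / x) - y * psi (1 / y)
       + y * psi x + x * psi y.
  rewrite /psi_tilde /Rdiv !Rmult_1_l; ring.
rewrite -E.
have := Rmult_le_compat_r _ _ _ (Rlt_le _ _ Hs) Hr.
have -> : psi_tilde psi dpsi x y / (psi x + psi y - 2 * psi 1) ^ 2 * (psi x + psi y - 2 * psi 1) ^ 2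
   = psi_tilde psi dpsi x y by field; lra.
done.
Qed.

Lemma core_ineq (psi dpsi : R -> R) (C : R) (D : nat) (y : 'I_D -> R) (z : 'I_D -> 'I_D -> R)
  (k0 : 'I_D -> 'I_D) :
  (forall a x, 0 < a -> 0 < x -> psi x <= psi a + dpsi a * (x - a)) ->
  is_inf (Cpsi_set psi dpsi) C -> 0 < C ->
  (forall i, 0 < y i) -> (forall i k, 0 < z i k) ->
  (forall k (g : R -> R), \big[Rplus/0]_(i < D) g (z i k) = \big[Rplus/0]_(i < D) g (z k i)) ->
  injective k0 -> (forall i, z i (k0 i) = 1) ->
  2 * C * (\big[Rplus/0]_(i < D) (psi (y i) - psi 1)) ^ 2 <=
  INR D * \big[Rplus/0]_(i < D) \big[Rplus/0]_(k < D)
     (dpsi (y i) * z i k - y i * psi (z i k / y i) - dpsi (y i) * y i * y k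
      + y k * (psi (y i) - psi 1) + y i * psi 1).
Proof.
move=> Ht Hinf HC Hy Hz Hsw Hk0 Hz1.
set G := fun i w => dpsi (y i) * w - y i * psi (w / y i).
set rest := fun i k => - (dpsi (y i) * y i * y k) + y k * (psi (y i) - psi 1) + y i * psi 1.
have ET : forall i k, dpsi (y i) * z i k - y i * psi (z i k / y i) - dpsi (y i) * y i * y k
      + y k * (psi (y i) - psi 1) + y i * psi 1 = G i (z i k) + rest i k.
  by move=> i k; rewrite /G /rest; ring.
set S := \big[Rplus/0]_(i < D) \big[Rplus/0]_(k < D) _.
have ES : S = \big[Rplus/0]_(i < D) \big[Rplus/0]_(k < D) G i (z i k)
            + \big[Rplus/0]_(i < D) \big[Rplus/0]_(k < D) rest i k.
  rewrite /S -sumD; apply: sum_ext => i; rewrite -sumD; apply: sum_ext => k; exact: ET.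
have EG : \big[Rplus/0]_(i < D) \big[Rplus/0]_(k < D) G i (z i k)
        = \big[Rplus/0]_(i < D) \big[Rplus/0]_(k < D) G k (z i k).
  transitivity (\big[Rplus/0]_(i < D) \big[Rplus/0]_(k < D) G i (z k i)).
    by apply: sum_ext => i; rewrite (Hsw i (G i)).
  exact: sum_swap.
have ER : \big[Rplus/0]_(i < D) \big[Rplus/0]_(k < D) rest i k
        = \big[Rplus/0]_(i < D) \big[Rplus/0]_(k < D) rest k i.
  exact: sum_swap.
set Hs := fun i k => G i (z i k) + G k (z i k) + rest i k + rest k i.
have E2 : 2 * S = \big[Rplus/0]_(i < D) \big[Rplus/0]_(k < D) Hs i k.
  have -> : 2 * S = S + S by ring.
  rewrite {1}ES; rewrite {1}EG ER ES.
  have -> : forall a b c d : R, a + b + (c + d) = (c + a) + (d + b) by move=> *; ring.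
  rewrite -!sumD; apply: sum_ext => i; rewrite -!sumD; apply: sum_ext => k.
  rewrite /Hs; ring.
have Hs0 : forall i k, 0 <= Hs i k.
  move=> i k.
  have := @Hsym_ge0 psi dpsi Ht (y i) (y k) (z i k) (Hy i) (Hy k) (Hz i k).
  rewrite /Hs /G /rest.
  move=> H; lra.
set P := fun i => psi (y i) - psi 1.
have Hsk : forall i, C * (P i + P (k0 i)) ^ 2 <= Hs i (k0 i).
  move=> i.
  have := @tilde_bound psi dpsi C Ht Hinf HC (y i) (y (k0 i)) (Hy i) (Hy (k0 i)).
  rewrite /Hs /G /rest /P Hz1.
  have -> : psi (y i) - psi 1 + (psi (y (k0 i)) - psi 1) = psi (y i) + psi (y (k0 i)) - 2 * psi 1 by ring.
  move=> H; lra.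
have L1 : C * \big[Rplus/0]_(i < D) ((P i + P (k0 i)) ^ 2) <= 2 * S.
  rewrite E2 sumM; apply: sum_le => i.
  eapply Rle_trans; first exact: (Hsk i).
  apply: sum_drop => k; exact: Hs0.
have L2 := @cauchy D (fun i => P i + P (k0 i)).
have L3 : \big[Rplus/0]_(i < D) (P i + P (k0 i)) = 2 * \big[Rplus/0]_(i < D) P i.
  rewrite sumD -(@sum_reindex D k0 P Hk0); ring.
rewrite L3 in L2.
have HD : 0 <= INR D by apply: pos_INR.
have L4 := Rmult_le_compat_l (INR D) _ _ HD L1.
have L5 := Rmult_le_compat_l C _ _ (Rlt_le _ _ HC) L2.
rewrite /P in L5 L4 *.
nra.
Qed.

Lemma nbr_mem (T : finType) (e : rel T) (D : nat) (h : 'I_D -> T) (w : T) :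
  symmetric e -> degree e w = D -> (forall i, e (h i) w) ->
  (forall i j, i <> j -> h i <> h j) ->
  forall u, e w u -> exists i, u = h i.
Proof.
move=> Hs Hd Hn Hdist u Hu.
have Hinj := inj_of_dist Hdist.
have Hsub : {subset map h (index_enum 'I_D) <= enum [pred u | e w u]}.
  move=> x /mapP [i _ ->]; rewrite mem_enum inE Hs; exact: Hn.
have [_ Heq] := uniq_min_size (s1 := map h (index_enum 'I_D)) (s2 := enum [pred u | e w u])
  ltac:(by rewrite map_inj_uniq // index_enum_uniq) Hsub
  ltac:(by rewrite -cardE size_map size_ie; move: Hd; rewrite /degree => ->).
have : u \in enum [pred u | e w u] by rewrite mem_enum inE.
rewrite -Heq => /mapP [i _ ->]; by exists i.
Qed.

Lemma lin_o n (X Y Z : 'I_n -> R) (L a : R) : a <> 0 ->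
  \big[Rplus/0]_(i < n) X i + L * \big[Rplus/0]_(i < n) Y i / a - \big[Rplus/0]_(i < n) Z i / a
  = \big[Rplus/0]_(i < n) (X i + L * Y i / a - Z i / a).
Proof.
move=> Ha.
transitivity (\big[Rplus/0]_(i < n) (X i + (L / a) * Y i + (- / a) * Z i)).
  rewrite !sumD -!sumM; field; exact Ha.
by apply: sum_ext => i; field.
Qed.

Lemma lin_i n (A B Cc Pk : 'I_n -> R) (al c1 c2 be ga : R) : c1 <> 0 -> c2 <> 0 ->
  al * (\big[Rplus/0]_(k < n) A k / c1 - \big[Rplus/0]_(k < n) B k / c2)
  + \big[Rplus/0]_(k < n) B k / c2 * be
  - (ga * \big[Rplus/0]_(k < n) Cc k - c2 * \big[Rplus/0]_(k < n) Pk k) / c2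
  = \big[Rplus/0]_(k < n) (al * (A k / c1 - B k / c2) + B k / c2 * be - (ga * Cc k - c2 * Pk k) / c2).
Proof.
move=> H1 H2.
transitivity (\big[Rplus/0]_(k < n) ((al / c1) * A k + ((be - al) / c2) * B k + (- (ga / c2)) * Cc k + Pk k)).
  rewrite !sumD -!sumM; field; split; assumption.
by apply: sum_ext => k; field.
Qed.

Lemma big_n0 n (F : 'I_n -> R) : n = 0%nat -> \big[Rplus/0]_(i < n) F i = 0.
Proof. by case: n F => // F _; rewrite big_ord0. Qed.

Theorem mainTheorem13 (D : nat) (T : finType) (e : rel T)
  (psi dpsi : R -> R) (C : R) :
  simple_graph e -> ricci_flat e D ->
  C1_pos psi dpsi -> concave_pos psi ->
  is_inf (Cpsi_set psi dpsi) C -> 0 < C ->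
  CDpsi e psi dpsi (INR D / C).
Proof.
move=> [Hirr Hsym] Hrf HC1 Hconc Hinf HC f Hf v.
have [Hdeg [eta [He [Hdist Hcomm]]]] := Hrf v.
have Ht := @tangent psi dpsi HC1 Hconc.
have Hvv : inN e v v by left.
have HNv : forall i, inN e v (eta i v) by move=> i; right; exact: He.
have Hlap : forall w (g : T -> R), inN e v w ->
    lap e g w = \big[Rplus/0]_(i < D) (g (eta i w) - g w).
  move=> w g Hw; rewrite /lap.
  apply: (@nbr_sum T e D (fun i => eta i w) w Hsym (Hdeg w Hw) (fun i => He w i Hw)
            (fun i j => Hdist w i j Hw) (fun u => g u - g w)).
set a := f v.
have Ha : 0 < a := Hf v.
set y := fun i => f (eta i v) / a.
set z := fun i k => f (eta k (eta i v)) / a.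
have Hy : forall i, 0 < y i by move=> i; apply: Rdiv_lt_0_compat.
have Hz : forall i k, 0 < z i k by move=> i k; apply: Rdiv_lt_0_compat.
have Huniq : forall k, uniq (map (fun i => eta i (eta k v)) (index_enum 'I_D)).
  move=> k; rewrite map_inj_uniq ?index_enum_uniq //.
  apply: inj_of_dist => i j; exact: Hdist _ _ _ (HNv k).
have Hmem : forall k, map (fun i => eta i (eta k v)) (index_enum 'I_D)
                   =i map (fun i => eta k (eta i v)) (index_enum 'I_D).
  move=> k x; apply/mapP/mapP => -[j _ ->].
  - have [H1 _] := Hcomm k (eta j (eta k v)).
    have [l Hl] := H1 (ex_intro _ j erefl); apply: (ex_intro2 _ _ l); [exact: mem_index_enum | exact: Hl].
  - have [_ H2] := Hcomm k (eta k (eta j v)).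
    have [l Hl] := H2 (ex_intro _ j erefl); apply: (ex_intro2 _ _ l); [exact: mem_index_enum | exact: Hl].
have Hsw : forall k (g : R -> R), \big[Rplus/0]_(i < D) g (z i k) = \big[Rplus/0]_(i < D) g (z k i).
  move=> k g; symmetry.
  transitivity (\big[Rplus/0]_(u <- map (fun i => eta i (eta k v)) (index_enum 'I_D)) g (f u / a)).
    by rewrite big_map.
  rewrite (@seq_sum_eq T _ _ (fun u => g (f u / a)) (Huniq k) _ (Hmem k)).
    by rewrite big_map.
  by rewrite !size_map.
have Huniq2 : forall k, uniq (map (fun i => eta k (eta i v)) (index_enum 'I_D)).
  move=> k; apply: (leq_size_uniq (Huniq k)); first by move=> x; rewrite (Hmem k).
  by rewrite !size_map.
have Hk0ex : forall i, exists k, eta k (eta i v) = v.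
  move=> i.
  have [k Hk] := @nbr_mem T e D (fun k => eta k (eta i v)) (eta i v) Hsym (Hdeg _ (HNv i))
     (fun k => He _ k (HNv i)) (fun k l => Hdist _ k l (HNv i)) v
     (He v i Hvv).
  by exists k.
pose k0 := fun i => odflt i [pick k | eta k (eta i v) == v].
have Hk0 : forall i, eta (k0 i) (eta i v) = v.
  move=> i; rewrite /k0; case: pickP => [k /eqP -> //| Hn].
  have [k Hk] := Hk0ex i; move: (Hn k); by rewrite Hk eqxx.
have Hk0inj : injective k0.
  move=> i j Hij.
  apply: (@uniq_inj _ T _ (Huniq2 (k0 i))).
  by rewrite /= Hk0 Hij Hk0.
have Hz1 : forall i, z i (k0 i) = 1 by move=> i; rewrite /z Hk0 /a; field; apply: Rgt_not_eq; exact: Hf.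
have Core := @core_ineq psi dpsi C D y z k0 Ht Hinf HC Hy Hz Hsw Hk0inj Hz1.
have Hfv : f v <> 0 by apply: Rgt_not_eq; exact: Hf.
have Haa : forall w, f w / f w = 1 by move=> w; field; apply: Rgt_not_eq; exact: Hf.
have ELP : lap_psi e psi f v = \big[Rplus/0]_(i < D) (psi (y i) - psi 1).
  rewrite /lap_psi (Hlap v _ Hvv); apply: sum_ext => i; by rewrite Haa.
have ET : Gamma2_psi_twice e psi dpsi f v = \big[Rplus/0]_(i < D) \big[Rplus/0]_(k < D)
     (dpsi (y i) * z i k - y i * psi (z i k / y i) - dpsi (y i) * y i * y k
      + y k * (psi (y i) - psi 1) + y i * psi 1).
  rewrite /Gamma2_psi_twice /Omega_psi.
  rewrite (Hlap v (fun x => dpsi (f x / f v) * (f x / f v) * (lap e f x / f x - lap e f v / f v)) Hvv).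
  rewrite (Hlap v (fun x => f x * lap_psi e psi f x) Hvv) ELP lin_o //.
  have Z0 : \big[Rplus/0]_(i < D) \big[Rplus/0]_(k < D) ((psi (y k) - psi 1) - (psi (y i) - psi 1)) = 0.
    rewrite (@sum_ext D _ (fun i => \big[Rplus/0]_(k < D) (psi (y k) - psi 1) - \big[Rplus/0]_(k < D) (psi (y i) - psi 1))); last by move=> i; rewrite sumB.
    rewrite sumB (@sum_swap D (fun i k => psi (y i) - psi 1)); ring.
  transitivity (\big[Rplus/0]_(i < D) \big[Rplus/0]_(k < D)
     ((dpsi (y i) * z i k - y i * psi (z i k / y i) - dpsi (y i) * y i * y k
      + y k * (psi (y i) - psi 1) + y i * psi 1) + ((psi (y k) - psi 1) - (psi (y i) - psi 1)))); last first.
    rewrite (@sum_ext D _ (fun i => \big[Rplus/0]_(k < D) (dpsi (y i) * z i k - y i * psi (z i k / y i) - dpsi (y i) * y i * y k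
      + y k * (psi (y i) - psi 1) + y i * psi 1) + \big[Rplus/0]_(k < D) ((psi (y k) - psi 1) - (psi (y i) - psi 1)))); last by move=> i; rewrite sumD.
    rewrite sumD Z0; ring.
  apply: sum_ext => i.
  rewrite (Hlap (eta i v) f (HNv i)) (Hlap v f Hvv) /lap_psi (Hlap (eta i v) _ (HNv i)).
  have HfN : f (eta i v) <> 0 by apply: Rgt_not_eq; exact: Hf.
  transitivity (dpsi (f (eta i v) / f v) * (f (eta i v) / f v) *
     (\big[Rplus/0]_(k < D) (f (eta k (eta i v)) - f (eta i v)) / f (eta i v)
      - \big[Rplus/0]_(k < D) (f (eta k v) - f v) / f v)
    + \big[Rplus/0]_(k < D) (f (eta k v) - f v) / f v * (psi (y i) - psi 1)
    - (f (eta i v) * \big[Rplus/0]_(k < D) (psi (f (eta k (eta i v)) / f (eta i v)) - psi (f (eta i v) / f (eta i v)))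
       - f v * \big[Rplus/0]_(k < D) (psi (y k) - psi 1)) / f v).
    rewrite /Rdiv; ring.
  rewrite lin_i //.
  apply: sum_ext => k.
  have Hq : f (eta k (eta i v)) / f v / (f (eta i v) / f v) = f (eta k (eta i v)) / f (eta i v).
    by field.
  rewrite /y /z /a Hq Haa; field; split; assumption.
rewrite /Gamma2_psi ET ELP.
set S := \big[Rplus/0]_(i < D) \big[Rplus/0]_(k < D) _ in Core *.
set Q := \big[Rplus/0]_(i < D) (psi (y i) - psi 1) in Core *.
apply: Rle_ge.
have Hq2 : 0 <= Q ^ 2 by apply: pow2_ge_0.
destruct (Nat.eq_dec D 0) as [HD0|HDn].
  have HS : S = 0 by rewrite /S; apply: big_n0.
  have HQ : Q = 0 by rewrite /Q; apply: big_n0.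
  rewrite HS HQ /=; lra.
have HD : 0 < INR D by apply: lt_0_INR; lia.
have -> : / (INR D / C) = C / INR D by field; split; lra.
apply: (Rmult_le_reg_l (2 * INR D)); first lra.
have -> : 2 * INR D * (C / INR D * Q ^ 2) = 2 * C * Q ^ 2 by field; lra.
lra.
Qed.
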